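(* Let $n>1$ be an odd integer and let $M$ be either $(n+1)/2$ or $n-1$. Then \[ \sum_{k=0}^{M}[4k-1]\frac{(aq^{-1},q^{-1}/a,q^{-1}/b,cq^{-1},dq^{-1},q^{-1};q^2)_k}{(q^2/a,aq^2,bq^2,q^2/c,q^2/d,q^2;q^2)_k}\bigg(\frac{bq^7}{cd}\bigg)^k \equiv0\pmod{\Phi_n(q)}. \]
   Context: Here $q,a,b,c,d$ are indeterminates. The $q$-shifted factorial is $(x;q)_0=1$, $(x;q)_k=(1-x)(1-xq)\cdots(1-xq^{k-1})$ for $k\ge1$, and $(x_1,\dots,x_m;q)_k=(x_1;q)_k\cdots(x_m;q)_k$. The $q$-integer is $[m]=(1-q^m)/(1-q)$, and $\Phi_n(q)$ is the $n$-th cyclotomic polynomial in $q$. A congruence $A\equiv B$ modulo a polynomial $P$ between rational functions means that $A-B$ is a rational function whose numerator is divisible by $P$ and whose denominator is coprime to $P$. *)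

(* Defs.v *)
From HB Require Import structures.
From mathcomp Require Import all_boot all_order all_algebra.
From mathcomp Require Import cyclotomic.
From mathcomp Require Import mpoly.
Set Implicit Arguments. Unset Strict Implicit. Unset Printing Implicit Defensive.
Import Order.TTheory GRing.Theory Num.Theory.
Local Open Scope ring_scope.

(* Coefficient field K = Q(a,b,c,d): fraction field of Q[a,b,c,d]. *)
Definition Kc : fieldType := {fraction {mpoly rat[4]}}.
Definition Pq : idomainType := {poly Kc}.
Definition Fq : fieldType := {fraction Pq}.

Definition qv : Fq := tofrac ('X : Pq).
Definition avar (i : 'I_4) : Fq :=
  tofrac (((tofrac (mpolyX rat (U_(i))%MM)) : Kc)%:P : Pq).
Definition av : Fq := avar 0.
Definition bv : Fq := avar 1.
Definition cv : Fq := avar 2.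
Definition dv : Fq := avar 3.

Definition qpoch (F : comRingType) (x p : F) (k : nat) : F :=
  \prod_(i < k) (1 - x * p ^+ i).

Definition qint (F : fieldType) (q : F) (m : int) : F := (1 - q ^ m) / (1 - q).

Definition PhiK (n : nat) : Pq := map_poly (intr : int -> Kc) 'Phi_n.

Definition congr_mod (A B : Fq) (P : Pq) : Prop :=
  exists N D : Pq, [/\ D != 0, P %| N, coprimep D P & A - B = tofrac N / tofrac D].

Definition term (k : nat) : Fq :=
  let q := qv in let a := av in let b := bv in let c := cv in let d := dv in
  qint q (4 * k%:Z - 1) *
  (qpoch (a / q) (q ^+ 2) k * qpoch (1 / (q * a)) (q ^+ 2) k * qpoch (1 / (q * b)) (q ^+ 2) k *
   qpoch (c / q) (q ^+ 2) k * qpoch (d / q) (q ^+ 2) k * qpoch (q ^-1) (q ^+ 2) k) /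
  (qpoch (q ^+ 2 / a) (q ^+ 2) k * qpoch (a * q ^+ 2) (q ^+ 2) k * qpoch (b * q ^+ 2) (q ^+ 2) k *
   qpoch (q ^+ 2 / c) (q ^+ 2) k * qpoch (q ^+ 2 / d) (q ^+ 2) k * qpoch (q ^+ 2) (q ^+ 2) k) *
  (b * q ^+ 7 / (c * d)) ^+ k.

(* Main.v *)
Require Import Defs.
From HB Require Import structures.
From mathcomp Require Import all_boot all_order all_algebra cyclotomic fraction algC mpoly.
From mathcomp Require Import ring zify.
Set Implicit Arguments. Unset Strict Implicit. Unset Printing Implicit Defensive.
Import Order.TTheory GRing.Theory Num.Theory.
Local Open Scope ring_scope.


Section Gen.
Variable F : fieldType.
Implicit Types a b c d : F.
Lemma fr_add a b c d : c != 0 -> d != 0 -> a/c + b/d = (a*d + b*c)/(c*d).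
Proof. by move=> h1 h2; field; rewrite h1 h2 ?oner_neq0. Qed.
Lemma fr_mul a b c d : c != 0 -> d != 0 -> (a/c) * (b/d) = (a*b)/(c*d).
Proof. by move=> h1 h2; field; rewrite h1 h2 ?oner_neq0. Qed.
Lemma g_mulsub a b c d : a * b - c * d = (a - c) * b + c * (b - d).
Proof. by ring. Qed.
Lemma g_invsub a b : a != 0 -> b != 0 -> a^-1 - b^-1 = (a^-1 * b^-1) * - (a - b).
Proof. by move=> h1 h2; field; rewrite h1 h2 ?oner_neq0. Qed.
Lemma g_neg1 a b : a != 0 -> b != 0 -> 1 - a / b = (- a / b) * (1 - a^-1 * b).
Proof. by move=> h1 h2; field; rewrite h1 h2 ?oner_neq0. Qed.
Lemma g_neg2 b : b != 0 -> 1 - 1 / b = (- 1 / b) * (1 - b).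
Proof. by move=> h2; field; rewrite h2. Qed.
Lemma g_sub a b : a * b - a = a * (b - 1).
Proof. by ring. Qed.
Lemma g_sub2 b : b != 0 -> b^-1 - 1 = - b^-1 * (b - 1).
Proof. by move=> h; field; rewrite h. Qed.
Lemma g_rev (x Q p R : F) : x != 0 -> Q * (p * R) = 1 -> 1 - x * Q = (- x * Q) * (1 - p / x * R).
Proof.
move=> x0 h.
have -> : (- x * Q) * (1 - p / x * R) = - x * Q + (x / x) * (Q * (p * R)) by ring.
by rewrite h mulfV // mulr1 mulNr addrC.
Qed.
Lemma g_qq (p x : F) : p != 0 -> p / (p / x) = x.
Proof. by move=> h; rewrite invfM invrK mulrA mulfV // mul1r. Qed.
Lemma g_ratio (a1 b1 c1 d1 wx wy : F) : b1 != 0 -> c1 != 0 -> d1 != 0 -> wx != 0 -> wy != 0 ->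
  a1 / b1 = (a1 * (wx * c1)) / (b1 * (wy * d1)) * (d1 / c1) * (wy / wx).
Proof. by move=> h1 h2 h3 h4 h5; field; rewrite h1 h2 h3 h4 h5. Qed.
Lemma g_wr (x y Q : F) : x != 0 -> Q != 0 -> (- y * Q) / (- x * Q) = y / x.
Proof. by move=> h1 h2; field; rewrite h1 h2 oppr_eq0 h1. Qed.
Lemma g_yx (p x : F) : p / x / x = p / x ^+ 2.
Proof. by rewrite expr2 invfM mulrA. Qed.
Lemma g_cancel (w b : F) : b != 0 -> w * b * b^-1 = w.
Proof. by move=> h; rewrite -mulrA mulfV // mulr1. Qed.
Lemma g_big (Q Z N1 N2 N3 N4 N5 N6 D1 D2 D3 D4 D5 D6 : F) :
  Q * (N1 * N2 * N3 * N4 * N5 * N6) / (D1 * D2 * D3 * D4 * D5 * D6) * Z =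
  Q * Z * (N1 / D1 * (N2 / D2 * (N3 / D3 * (N4 / D4 * (N5 / D5 * (N6 / D6 * 1)))))).
Proof. by rewrite !invfM; ring. Qed.
Lemma gA1 (a p : F) : p != 0 -> a != 0 -> p ^+ 2 / a = p / (a / p).
Proof. by move=> h1 h2; field; rewrite h1 h2 ?oner_neq0. Qed.
Lemma gA2 (a p : F) : p != 0 -> a != 0 -> a * p ^+ 2 = p / (a^-1 / p).
Proof. by move=> h1 h2; field; rewrite h1 h2 ?oner_neq0. Qed.
Lemma gA3 (a p : F) : p != 0 -> a != 0 -> 1 / (p * a) = a^-1 / p.
Proof. by move=> h1 h2; field; rewrite h1 h2 ?oner_neq0. Qed.
Lemma gA5 (p : F) : p != 0 -> p ^+ 2 = p / (1 / p).
Proof. by move=> h1; field; rewrite h1 ?oner_neq0. Qed.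
Lemma g_term (f : F -> F) (Q a b c d p Z : F) : p != 0 -> a != 0 -> b != 0 -> c != 0 -> d != 0 ->
  Q * (f (a / p) * f (1 / (p * a)) * f (1 / (p * b)) * f (c / p) * f (d / p) * f p^-1) /
  (f (p ^+ 2 / a) * f (a * p ^+ 2) * f (b * p ^+ 2) * f (p ^+ 2 / c) * f (p ^+ 2 / d) * f (p ^+ 2)) * Z
  = Q * Z * (f (a / p) / f (p / (a / p)) * (f (a^-1 / p) / f (p / (a^-1 / p)) *
     (f (b^-1 / p) / f (p / (b^-1 / p)) * (f (c / p) / f (p / (c / p)) *
     (f (d / p) / f (p / (d / p)) * (f (1 / p) / f (p / (1 / p)) * 1)))))).
Proof.
move=> p0 a0 b0 c0 d0.
rewrite -(gA2 p0 a0) -(gA2 p0 b0) -(gA1 p0 a0) -(gA1 p0 c0) -(gA1 p0 d0) -(gA5 p0).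
by rewrite -(gA3 p0 a0) -(gA3 p0 b0) (div1r p) g_big.
Qed.
Lemma gY (a p : F) : p / (a / p) = a^-1 * p ^+ 2.
Proof. by rewrite invfM invrK expr2 mulrC mulrA. Qed.
Lemma g_pW (a b c d p Q : F) : p != 0 -> a != 0 -> b != 0 -> c != 0 -> d != 0 ->
  (- (a / p) * Q) * ((- (a^-1 / p) * Q) * ((- (b^-1 / p) * Q) * ((- (c / p) * Q) *
  ((- (d / p) * Q) * ((- (1 / p) * Q) * 1))))) = (b * p ^+ 7 / (c * d))^-1 * p * Q ^+ 6.
Proof. by move=> h1 h2 h3 h4 h5; field; rewrite h1 h2 h3 h4 h5 ?oner_neq0. Qed.
Lemma g_pc (a b c d p : F) : p != 0 -> a != 0 -> b != 0 -> c != 0 -> d != 0 ->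
  (p / (a / p) ^+ 2) * ((p / (a^-1 / p) ^+ 2) * ((p / (b^-1 / p) ^+ 2) * ((p / (c / p) ^+ 2) *
  ((p / (d / p) ^+ 2) * ((p / (1 / p) ^+ 2) * 1))))) = p ^+ 4 * (b * p ^+ 7 / (c * d)) ^+ 2.
Proof. by move=> h1 h2 h3 h4 h5; field; rewrite h1 h2 h3 h4 h5 ?oner_neq0. Qed.
Lemma g_qint (A B p : F) : (1 - A) / (1 - p) * B = (1 - p)^-1 * (B - A * B).
Proof. by ring. Qed.
Lemma g_qint2 (C p : F) : - ((1 - C) / (1 - p)) = (1 - p)^-1 * (C - 1).
Proof. by ring. Qed.
Lemma g_fin (Q1 z qS Pk p : F) (a b : nat) : z != 0 -> (a <= b)%N ->
  Q1 * z ^+ (b - a) * ((z^-1) ^+ b * qS * Pk * (p ^+ 4 * z ^+ 2) ^+ a) =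
  (Q1 * (qS * (p ^+ 4) ^+ a)) * (z ^+ a * Pk).
Proof.
move=> h hab.
have hb : z ^+ b = z ^+ (b - a) * z ^+ a by rewrite -exprD subnK.
rewrite exprMn exprVn hb [(z ^+ 2) ^+ a]exprAC.
have h1 : z ^+ (b - a) != 0 by rewrite expf_neq0.
have h2 : z ^+ a != 0 by rewrite expf_neq0.
move: (z ^+ (b - a)) (z ^+ a) ((p ^+ 4) ^+ a) h1 h2 => u v w h1 h2.
by field; rewrite h1 h2.
Qed.
Lemma g_half (x h : F) : h * (1 + 1) = 1 -> x = (x + x) * h.
Proof. by move=> e; rewrite -[LHS]mulr1 -e; ring. Qed.
End Gen.
Lemma g_e1 (R : comRingType) (a b : R) : 1 - a*b - (1 - a) = a * - (b - 1).
Proof. by ring. Qed.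


Section S.
Variable n : nat.
Hypothesis n_gt1 : (1 < n)%N.
Local Notation P := (PhiK n).
Local Notation "x %:F" := (tofrac x).

Lemma P_dvd : P %| 'X^n - 1.
Proof.
have n0 : (0 < n)%N by apply: ltn_trans n_gt1.
have -> : 'X^n - 1 = map_poly (intr : int -> Kc) ('X^n - 1).
  by rewrite rmorphB rmorph1 /= map_polyXn.
rewrite /PhiK -(prod_Cyclotomic n0).
have [uDn _ inDn] := divisors_correct n0.
rewrite (big_rem n) ?inDn //= rmorphM /=.
exact: dvdp_mulIl.
Qed.

Lemma sizeP : size P = (totient n).+1.
Proof.
rewrite size_map_poly_id0 ?size_Cyclotomic //.
by rewrite (monicP (Cyclotomic_monic n)) rmorph1 oner_neq0.
Qed.

Lemma cop_neq0 D : coprimep D P -> D != 0.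
Proof.
apply: contraL => /eqP ->; rewrite coprime0p -size_poly_eq1 sizeP.
by rewrite eqSS -lt0n totient_gt0 (ltn_trans _ n_gt1).
Qed.

Definition Int (x : Fq) := exists N D : Pq, coprimep D P /\ x = N%:F / D%:F.
Definition Zr (x : Fq) := exists N D : Pq, [/\ P %| N, coprimep D P & x = N%:F / D%:F].
Definition eqv (x y : Fq) := Zr (x - y).
Definition Un (x : Fq) := [/\ x != 0, Int x & Int x^-1].

Lemma tofrac_neq0 D : coprimep D P -> D%:F != 0 :> Fq.
Proof. by move=> /cop_neq0; rewrite tofrac_eq0. Qed.

Lemma Int_poly N : Int N%:F.
Proof. by exists N, 1; rewrite coprime1p tofrac1 divr1. Qed.

Lemma Zr_poly N : P %| N -> Zr N%:F.
Proof. by exists N, 1; rewrite coprime1p tofrac1 divr1. Qed.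

Lemma Int_add x y : Int x -> Int y -> Int (x + y).
Proof.
move=> [N1 [D1 [c1 ->]]] [N2 [D2 [c2 ->]]].
exists (N1 * D2 + N2 * D1), (D1 * D2); rewrite coprimepMl c1 c2; split=> //.
have h1 := tofrac_neq0 c1; have h2 := tofrac_neq0 c2.
by rewrite (fr_add _ _ h1 h2) !tofracD !tofracM.
Qed.

Lemma Int_mul x y : Int x -> Int y -> Int (x * y).
Proof.
move=> [N1 [D1 [c1 ->]]] [N2 [D2 [c2 ->]]].
exists (N1 * N2), (D1 * D2); rewrite coprimepMl c1 c2; split=> //.
have h1 := tofrac_neq0 c1; have h2 := tofrac_neq0 c2.
by rewrite (fr_mul _ _ h1 h2) !tofracM.
Qed.

Lemma Int_opp x : Int x -> Int (- x).
Proof. by move=> [N1 [D1 [c1 ->]]]; exists (- N1), D1; rewrite tofracN mulNr. Qed.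

Lemma Int_sub x y : Int x -> Int y -> Int (x - y).
Proof. by move=> hx hy; apply: Int_add => //; apply: Int_opp. Qed.

Lemma Int0 : Int 0. Proof. by rewrite -tofrac0; apply: Int_poly. Qed.
Lemma Int1 : Int 1. Proof. by rewrite -tofrac1; apply: Int_poly. Qed.

Lemma Zr_Int x : Zr x -> Int x.
Proof. by move=> [N [D [_ c ->]]]; exists N, D. Qed.

Lemma Zr_add x y : Zr x -> Zr y -> Zr (x + y).
Proof.
move=> [N1 [D1 [d1 c1 ->]]] [N2 [D2 [d2 c2 ->]]].
exists (N1 * D2 + N2 * D1), (D1 * D2); rewrite coprimepMl c1 c2; split=> //.
  by rewrite dvdp_add // dvdp_mulr.
have h1 := tofrac_neq0 c1; have h2 := tofrac_neq0 c2.
by rewrite (fr_add _ _ h1 h2) !tofracD !tofracM.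
Qed.

Lemma Zr_mul x y : Int x -> Zr y -> Zr (x * y).
Proof.
move=> [N1 [D1 [c1 ->]]] [N2 [D2 [d2 c2 ->]]].
exists (N1 * N2), (D1 * D2); rewrite coprimepMl c1 c2; split=> //.
  by rewrite dvdp_mull.
have h1 := tofrac_neq0 c1; have h2 := tofrac_neq0 c2.
by rewrite (fr_mul _ _ h1 h2) !tofracM.
Qed.

Lemma Zr_opp x : Zr x -> Zr (- x).
Proof. by move=> hx; rewrite -mulN1r; apply: Zr_mul => //; apply/Int_opp/Int1. Qed.

Lemma Zr0 : Zr 0. Proof. by rewrite -tofrac0; apply: Zr_poly; rewrite dvdp0. Qed.

Lemma Zr_congr x : Zr x -> congr_mod x 0 P.
Proof.
move=> [N [D [d c ->]]]; exists N, D; split=> //; first exact: cop_neq0.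
by rewrite subr0.
Qed.

Lemma eqv_refl x : eqv x x. Proof. by rewrite /eqv subrr; apply: Zr0. Qed.
Lemma eqv_sym x y : eqv x y -> eqv y x.
Proof. by rewrite /eqv => h; rewrite -opprB; apply: Zr_opp. Qed.
Lemma eqv_trans x y z : eqv x y -> eqv y z -> eqv x z.
Proof. by rewrite /eqv => h1 h2; rewrite -(subrKA y); apply: Zr_add. Qed.
Lemma eqv_add x y x' y' : eqv x x' -> eqv y y' -> eqv (x + y) (x' + y').
Proof. by rewrite /eqv => h1 h2; rewrite opprD addrACA; apply: Zr_add. Qed.
Lemma eqv_mul x y x' y' : Int x' -> Int y -> eqv x x' -> eqv y y' -> eqv (x * y) (x' * y').
Proof.
rewrite /eqv => i1 i2 h1 h2.
rewrite g_mulsub.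
apply: Zr_add; first by rewrite mulrC; apply: Zr_mul.
by apply: Zr_mul.
Qed.
Lemma eqv_mull c x y : Int c -> eqv x y -> eqv (c * x) (c * y).
Proof. by rewrite /eqv => i h; rewrite -mulrBr; apply: Zr_mul. Qed.
Lemma eqv_inv x y : Un x -> Un y -> eqv x y -> eqv x^-1 y^-1.
Proof.
rewrite /eqv => [[x0 _ ix] [y0 _ iy]] h.
rewrite (g_invsub x0 y0).
by apply: Zr_mul; [apply: Int_mul | apply: Zr_opp].
Qed.
Lemma Un_mul x y : Un x -> Un y -> Un (x * y).
Proof.
move=> [x0 ix ix'] [y0 iy iy']; split; first exact (mulf_neq0 x0 y0).
  exact: Int_mul. by rewrite invfM; apply: Int_mul.
Qed.
Lemma Un_inv x : Un x -> Un x^-1.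
Proof. by move=> [x0 ix ix']; split; [rewrite invr_eq0; exact: x0 | exact: ix' | rewrite invrK; exact: ix]. Qed.
Lemma Un_Int x : Un x -> Int x. Proof. by case. Qed.


Lemma P_dvd_pow e : P %| 'X^(n * e) - 1.
Proof.
apply: dvdp_trans P_dvd _.
rewrite exprM -{2}(expr1n _ e) subrXX.
exact: dvdp_mulIl.
Qed.

Lemma cop_bez (p g : Pq) (c : Kc) : c != 0 -> P %| p * g - c%:P -> coprimep p P.
Proof.
move=> c0 /dvdpP [h e].
apply/Bezout_eq1_coprimepP; exists (c^-1 *: g, - (c^-1 *: h)) => /=.
rewrite mulNr -!scalerAl -scalerBr -e mulrC opprB addrC subrK.
by rewrite -mul_polyC -polyCM mulVf.
Qed.

Lemma cop_a (t : Kc) e : t ^+ n != 1 -> coprimep (1 - t%:P * 'X^e) P.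
Proof.
move=> tn.
apply: (@cop_bez _ (\sum_(i < n) 1 ^+ (n.-1 - i) * (t%:P * 'X^e) ^+ i) (1 - t ^+ n)).
  by rewrite subr_eq0 eq_sym.
rewrite -subrXX.
have -> : (1 : Pq) ^+ n - (t%:P * 'X^e) ^+ n - (1 - t ^+ n)%:P
   = (t ^+ n)%:P * - ('X^(n * e) - 1).
  rewrite exprMn -[(t%:P)^+n]rmorphXn /= -exprM mulnC expr1n.
  rewrite polyCB polyC1; exact: g_e1.
by rewrite dvdp_mull // dvdpNr P_dvd_pow.
Qed.

Definition fQK : {rmorphism rat -> Kc} := (@tofrac {mpoly rat[4]}) \o (@mpolyC 4 rat).

Lemma cop_pure s : ~~ (n %| s)%N -> coprimep ('X^s - 1 : Pq) P.
Proof.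
move=> ns.
have n0 : (0 < n)%N by apply: ltn_trans n_gt1.
have [z pz] := C_prim_root_exists n0.
have eX : ('X^s - 1 : Pq) = map_poly fQK ('X^s - 1).
  by rewrite rmorphB rmorph1 /= map_polyXn.
have eP : P = map_poly fQK (map_poly (intr : int -> rat) 'Phi_n).
  rewrite /PhiK -map_poly_comp; apply: eq_map_poly => x; exact: (esym (rmorph_int fQK x)).
rewrite eX eP coprimep_map.
rewrite -(coprimep_map (@ratr algC)).
rewrite rmorphB rmorph1 /= map_polyXn -map_poly_comp.
have -> : map_poly (ratr \o intr) 'Phi_n = map_poly (intr : int -> algC) 'Phi_n.
  by apply: eq_map_poly => x /=; rewrite ratr_int.
rewrite (Cintr_Cyclotomic pz).
apply: Pdiv.ClosedField.root_coprimep => x rx; apply/negP => /eqP cx.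
have : root (cyclotomic z n) x by rewrite /root cx.
rewrite (root_cyclotomic pz) => px.
move: rx; rewrite /root !hornerE subr_eq0 -(prim_order_dvd px).
by rewrite (negPf ns).
Qed.

Definition iK (t : Kc) : Fq := (t%:P)%:F.
Lemma iKM s t : iK (s * t) = iK s * iK t.
Proof. by rewrite /iK polyCM tofracM. Qed.
Lemma iK1 : iK 1 = 1.
Proof. by rewrite /iK polyC1 tofrac1. Qed.
Lemma iK_eq0 t : (iK t == 0) = (t == 0).
Proof. by rewrite /iK tofrac_eq0 polyC_eq0. Qed.
Lemma iKV t : t != 0 -> iK t^-1 = (iK t)^-1.
Proof.
move=> t0; apply/esym/mulr1_eq; rewrite -iKM mulfV; first exact: iK1.
exact: t0.
Qed.

Lemma Int_iK t : Int (iK t). Proof. exact: Int_poly. Qed.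
Lemma Un_iK t : t != 0 -> Un (iK t).
Proof.
move=> t0; split; first by rewrite iK_eq0; exact: t0.
  exact: Int_iK.
by rewrite -(iKV t0); apply: Int_iK.
Qed.

Lemma Un_frac N : coprimep N P -> Un N%:F.
Proof.
move=> c; split; first exact: tofrac_neq0 c.
  exact: Int_poly.
by exists 1, N; split=> //; rewrite tofrac1 div1r.
Qed.

Lemma Un_opp x : Un x -> Un (- x).
Proof.
move=> [x0 ix ix']; split; first by rewrite oppr_eq0.
  exact: Int_opp. by rewrite invrN; apply: Int_opp.
Qed.

Lemma qE : qv = ('X)%:F. Proof. by []. Qed.

Lemma Un_q : Un qv.
Proof.
apply: Un_frac; apply: (@cop_bez 'X ('X^(n.-1)) 1 (oner_neq0 _)).
rewrite -exprS prednK ?polyC1; first exact: P_dvd.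
exact: ltn_trans n_gt1.
Qed.

Lemma q_neq0 : qv != 0. Proof. by case: Un_q. Qed.

Lemma Un_qn s : Un (qv ^+ s).
Proof. elim: s => [|s IH]; first by rewrite expr0 -tofrac1; apply: Un_frac; rewrite coprime1p.
by rewrite exprS; apply: Un_mul => //; apply: Un_q. Qed.

Lemma Un_qz (z : int) : Un (qv ^ z).
Proof. case: z => s; first exact: Un_qn. exact: (Un_inv (Un_qn s.+1)). Qed.

Lemma Un_fa t s : t != 0 -> t ^+ n != 1 -> Un (1 - iK t * qv ^+ s).
Proof.
move=> t0 tn.
have -> : 1 - iK t * qv ^+ s = (1 - t%:P * 'X^s)%:F.
  by rewrite tofracB tofrac1 tofracM tofracXn.
by apply: Un_frac; apply: cop_a.
Qed.

Lemma Un_faz t (z : int) : t != 0 -> t ^+ n != 1 -> Un (1 - iK t * qv ^ z).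
Proof.
move=> t0 tn; case: z => s; first exact: Un_fa.
have qs := Un_qn s.+1; case: (qs) => qs0 _ _.
have it0 : iK t != 0 by rewrite iK_eq0; exact: t0.
rewrite [qv ^ Negz s]/= -[iK t * _]/(iK t / qv ^+ s.+1) (g_neg1 it0 qs0).
apply: Un_mul; first by apply: Un_mul; [apply: Un_opp; apply: (Un_iK t0) | apply: Un_inv; exact: qs].
rewrite -(iKV t0); apply: Un_fa; first by rewrite invr_eq0; exact: t0.
by rewrite exprVn invr_eq1; exact: tn.
Qed.

Lemma Un_fp s : ~~ (n %| s)%N -> Un (1 - qv ^+ s).
Proof.
move=> ns; rewrite -opprB; apply: Un_opp.
have -> : qv ^+ s - 1 = ('X^s - 1)%:F by rewrite tofracB tofrac1 tofracXn.
by apply: Un_frac; apply: cop_pure.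
Qed.

Lemma Un_fpz (z : int) : ~~ (n %| `|z|)%N -> Un (1 - qv ^ z).
Proof.
case: z => s ns; first exact: Un_fp.
have qs := Un_qn s.+1; case: (qs) => qs0 _ _.
have -> : qv ^ Negz s = 1 / qv ^+ s.+1 by rewrite div1r.
rewrite (g_neg2 qs0).
apply: Un_mul; last exact: (Un_fp ns).
by rewrite mulNr; apply: Un_opp; rewrite div1r; apply: Un_inv; exact: qs.
Qed.

Lemma Zr_qnt (t : nat) : Zr (qv ^+ (n * t) - 1).
Proof.
have -> : qv ^+ (n * t) - 1 = ('X^(n * t) - 1)%:F by rewrite tofracB tofrac1 tofracXn.
by apply: Zr_poly; apply: P_dvd_pow.
Qed.

Lemma eqv_qpow (z1 z2 t : int) : z1 = z2 + n%:Z * t -> eqv (qv ^ z1) (qv ^ z2).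
Proof.
move=> ->; rewrite /eqv (expfzDr _ _ q_neq0) g_sub.
apply: Zr_mul; first by case: (Un_qz z2).
case: t => s; first by rewrite -PoszM; apply: Zr_qnt.
rewrite NegzE mulrN -invr_expz -PoszM [qv ^ Posz _]/=.
have [h0 h1 h2] := Un_qn (n * s.+1).
rewrite (g_sub2 h0); apply: Zr_mul; last exact: Zr_qnt.
apply: Int_opp; exact: h2.
Qed.

Definition tX (i : 'I_4) : Kc := tofrac (mpolyX rat U_(i)%MM).

Lemma tX_neq0 i : tX i != 0.
Proof.
rewrite /tX tofrac_eq0; apply/negP => /eqP h.
have := congr1 (meval (fun _ => 2%:R)) h.
rewrite mevalXU meval0 => /eqP; by [].
Qed.

Lemma tX_pow i : tX i ^+ n != 1.
Proof.
apply/negP => /eqP h.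
have h2 : (mpolyX rat U_(i)%MM) ^+ n = 1.
  by apply/eqP; rewrite -(@tofrac_eq {mpoly rat[4]}) tofracXn tofrac1; apply/eqP.
have := congr1 (meval (fun _ => 2%:R)) h2.
rewrite rmorphXn /= mevalXU meval1 => /eqP.
rewrite pexpr_eq1 //; exact: ltn_trans n_gt1.
Qed.

Lemma tXV_pow i : (tX i)^-1 ^+ n != 1.
Proof. by rewrite exprVn invr_eq1; exact: tX_pow. Qed.

Local Notation q := qv.
Definition qp (x : Fq) k := qpoch x (q ^+ 2) k.

Lemma Un1 : Un 1.
Proof. by rewrite -tofrac1; apply: Un_frac; rewrite coprime1p. Qed.

Lemma Int_q s : Int (q ^+ s). Proof. by case: (Un_qn s) => _ h _; exact: h. Qed.
Lemma Int_qz z : Int (q ^ z). Proof. by case: (Un_qz z) => _ h _; exact: h. Qed.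

Lemma Int_exp x k : Int x -> Int (x ^+ k).
Proof. by move=> ix; elim: k => [|k IH]; [rewrite expr0; exact: Int1 | rewrite exprS; apply: Int_mul]. Qed.

Lemma Int_q2 i : Int ((q ^+ 2) ^+ i). Proof. by apply: Int_exp; apply: Int_q. Qed.

Lemma qp_split x a b : qp x (a + b) = qp x a * qp (x * (q ^+ 2) ^+ a) b.
Proof.
rewrite /qp /qpoch big_split_ord /=; congr (_ * _).
by apply: eq_bigr => i _; rewrite exprD mulrA.
Qed.

Lemma Int_qp x k : Int x -> Int (qp x k).
Proof.
move=> ix; rewrite /qp /qpoch; apply: (big_ind Int Int1 Int_mul) => i _.
by apply: Int_sub; [apply: Int1 | apply: Int_mul; [exact: ix | exact: Int_q2]].
Qed.

Lemma Un_qp x k : (forall i, (i < k)%N -> Un (1 - x * (q ^+ 2) ^+ i)) -> Un (qp x k).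
Proof.
move=> h; rewrite /qp /qpoch; apply: (big_ind Un Un1 Un_mul) => i _.
exact: h (ltn_ord i).
Qed.

Lemma eqv_big (I : Type) (r : seq I) (Pr : pred I) (f g : I -> Fq) :
  (forall i, Pr i -> [/\ Int (f i), Int (g i) & eqv (f i) (g i)]) ->
  eqv (\prod_(i <- r | Pr i) f i) (\prod_(i <- r | Pr i) g i).
Proof.
move=> h.
suff : [/\ Int (\prod_(i <- r | Pr i) f i), Int (\prod_(i <- r | Pr i) g i) &
          eqv (\prod_(i <- r | Pr i) f i) (\prod_(i <- r | Pr i) g i)] by case.
apply: (big_ind2 (fun x y => [/\ Int x, Int y & eqv x y])).
- by split; [exact: Int1 | exact: Int1 | exact: eqv_refl].
- move=> a1 a2 b1 b2 [i1 i2 e1] [j1 j2 e2]; split.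
  + exact: Int_mul. + exact: Int_mul.
  + exact: eqv_mul.
- exact: h.
Qed.

Lemma eqv_opp x y : eqv x y -> eqv (- x) (- y).
Proof. by rewrite /eqv => h; rewrite -opprD; apply: Zr_opp. Qed.

Lemma eqv_sub1 x a b : Int x -> eqv a b -> eqv (1 - x * a) (1 - x * b).
Proof.
move=> ix h; apply: eqv_add; first exact: eqv_refl.
by apply: eqv_opp; apply: eqv_mull.
Qed.

Lemma qn_int s : q ^+ s = q ^ (Posz s). Proof. by []. Qed.

Variable m : nat.
Hypothesis hm : (n.+1 = 2 * m)%N.

Lemma qp_rev_eqv x k : (k <= m)%N -> Int x ->
  eqv (qp (x * (q ^+ 2) ^+ (m - k)) k) (\prod_(j < k) (1 - x * q ^ (-1 - 2 * (j : nat)%:Z))).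
Proof.
move=> hk ix; rewrite /qp /qpoch (reindex_inj rev_ord_inj) /=.
apply: eqv_big => j _; split.
- by apply: Int_sub; [exact: Int1 | apply: Int_mul; [apply: Int_mul; [exact: ix| exact: Int_q2] | exact: Int_q2]].
- by apply: Int_sub; [exact: Int1 | apply: Int_mul; [exact: ix | exact: Int_qz]].
rewrite -mulrA; apply: eqv_sub1; first exact: ix.
rewrite -!exprM -exprD qn_int; apply: (eqv_qpow (t := 1)).
have := ltn_ord j; lia.
Qed.

Definition W x k := \prod_(j < k) (- x * q ^ (-1 - 2 * (j : nat)%:Z)).

Lemma rev_exact x k : x != 0 ->
  \prod_(j < k) (1 - x * q ^ (-1 - 2 * (j : nat)%:Z)) = W x k * qp (q / x) k.
Proof.
move=> x0; rewrite /W /qp /qpoch -big_split /=; apply: eq_bigr => j _.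
apply: (g_rev x0).
rewrite -(exprM q 2 j) (qn_int (2 * j)) -{2}(expr1 q) (qn_int 1) -(expfzDr _ _ q_neq0) -(expfzDr _ _ q_neq0).
have -> : -1 - 2 * (j : nat)%:Z + (Posz 1 + Posz (2 * j)) = 0 by lia.
by rewrite expr0z.
Qed.

Lemma Int_W x k : Int x -> Int (W x k).
Proof.
move=> ix; rewrite /W; apply: (big_ind Int Int1 Int_mul) => j _.
by apply: Int_mul; [apply: Int_opp; exact: ix | exact: Int_qz].
Qed.

Lemma MX x k : (k <= m)%N -> Int x -> Int (q / x) -> x != 0 ->
  eqv (qp x m) (qp x (m - k) * (W x k * qp (q / x) k)).
Proof.
move=> hk ix iy x0.
rewrite -{1}(subnK hk) qp_split; apply: eqv_mull; first exact: Int_qp.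
rewrite -(rev_exact k x0); exact: qp_rev_eqv.
Qed.

Definition rho x k := qp x k / qp (q / x) k.

Lemma Un_W x k : Un x -> Un (W x k).
Proof.
move=> ux; rewrite /W; apply: (big_ind Un Un1 Un_mul) => j _.
by apply: Un_mul; [apply: Un_opp; exact: ux | exact: Un_qz].
Qed.

Lemma W_ratio x k : x != 0 -> W (q / x) k / W x k = (q / x ^+ 2) ^+ k.
Proof.
move=> x0; rewrite /W -prodf_div.
rewrite (eq_bigr (fun _ => q / x ^+ 2)); last first.
  move=> j _; rewrite (g_wr _ x0); first by rewrite g_yx.
  exact: expfz_neq0 q_neq0.
by rewrite prodr_const card_ord.
Qed.

Lemma Un_inv_Int x : Un x -> Int x^-1. Proof. by case. Qed.
Lemma Un_neq0 x : Un x -> x != 0. Proof. by case. Qed.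

Lemma RX x k : (k <= m)%N -> Un x ->
  (forall i, (i < m)%N -> Un (1 - x * (q ^+ 2) ^+ i)) ->
  (forall i, (i < m)%N -> Un (1 - (q / x) * (q ^+ 2) ^+ i)) ->
  eqv (rho x (m - k)) (W x m * rho x k * (q / x ^+ 2) ^+ k).
Proof.
move=> hk ux hx hy.
have x0 := Un_neq0 ux.
have iy : Int (q / x) by apply: Int_mul; [exact: Int_poly | exact: Un_inv_Int].
have ix : Int x by case: ux.
have uy : Un (q / x) by apply: Un_mul; [exact: Un_q | exact: Un_inv].
have y0 := Un_neq0 uy.
have Ux j : (j <= m)%N -> Un (qp x j).
  by move=> hj; apply: Un_qp => i hi; apply: hx; apply: leq_trans hi hj.
have Uy j : (j <= m)%N -> Un (qp (q / x) j).
  by move=> hj; apply: Un_qp => i hi; apply: hy; apply: leq_trans hi hj.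
have hmk : (m - k <= m)%N by apply: leq_subr.
have e1 := MX hk ix iy x0.
have e2 := MX hk iy (eq_ind_r Int ix (g_qq x q_neq0)) y0.
rewrite (g_qq x q_neq0) in e2.
have e0 := MX (leqnn m) ix iy x0.
have q0 : qp x 0 = 1 by rewrite /qp /qpoch big_ord0.
rewrite subnn q0 mul1r in e0.
rewrite /rho (g_ratio (qp x (m - k)) (Un_neq0 (Uy _ hmk)) (Un_neq0 (Uy _ hk)) (Un_neq0 (Ux _ hk))
   (Un_neq0 (Un_W k ux)) (Un_neq0 (Un_W k uy))).
rewrite (W_ratio k x0) -mulrA -[X in eqv _ X]mulrA.
apply: eqv_mul.
- exact: Int_W.
- apply: Int_mul; first by apply: Int_mul; [exact: Int_qp | exact: Un_inv_Int (Uy _ hk)].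
  apply: Int_exp; apply: Int_mul; first exact: Int_poly.
  by rewrite expr2 invfM; apply: Int_mul; exact: Un_inv_Int ux.
- have uB := Uy _ (leqnn m).
  have uY : Un (qp (q / x) (m - k) * (W (q / x) k * qp x k)).
    by apply: Un_mul; [exact: Uy | apply: Un_mul; [exact: Un_W | exact: Ux]].
  apply: (@eqv_trans _ (qp x m * (qp (q / x) m)^-1)).
    apply: eqv_mul.
    + exact: Int_qp.
    + exact: Un_inv_Int uY.
    + exact: eqv_sym e1.
    + by apply: eqv_inv => //; exact: eqv_sym e2.
  rewrite -{1}(g_cancel (W x m) (Un_neq0 uB)).
  apply: eqv_mul.
  + by apply: Int_mul; [exact: Int_W | exact: Int_qp].
  + exact: Un_inv_Int uB.
  + exact: e0.
  + exact: eqv_refl.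
- exact: eqv_refl.
Qed.

Definition tA := tX 0. Definition tB := tX 1. Definition tC := tX 2. Definition tD := tX 3.
Definition ts : seq Kc := [:: tA; tA^-1; tB^-1; tC; tD; 1].
Definition zz : Fq := bv * q ^+ 7 / (cv * dv).
Definition xt (t : Kc) : Fq := iK t / q.

Lemma term_rho k : term k = qint q (4 * k%:Z - 1) * zz ^+ k * \prod_(t <- ts) rho (xt t) k.
Proof.
rewrite /term /=.
have q0 := q_neq0.
have a0 : av != 0 by rewrite iK_eq0; exact: tX_neq0.
have b0 : bv != 0 by rewrite iK_eq0; exact: tX_neq0.
have c0 : cv != 0 by rewrite iK_eq0; exact: tX_neq0.
have d0 : dv != 0 by rewrite iK_eq0; exact: tX_neq0.
rewrite /ts !big_cons big_nil /rho /xt /qp.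
rewrite (iKV (tX_neq0 0)) (iKV (tX_neq0 1)) iK1.
have eA : iK tA = av := erefl _. have eB : iK tB = bv := erefl _.
have eC : iK tC = cv := erefl _. have eD : iK tD = dv := erefl _.
rewrite eA eB eC eD /zz.
exact: (g_term (fun x => qpoch x (q ^+ 2) k) (qint q (4 * k%:Z - 1)) ((bv * q ^+ 7 / (cv * dv)) ^+ k) q0 a0 b0 c0 d0).
Qed.

Definition good (t : Kc) := t != 0 /\ t ^+ n != 1.

Lemma goodV t : good t -> good t^-1.
Proof. by case=> t0 tn; split; [rewrite invr_eq0; exact: t0 | rewrite exprVn invr_eq1; exact: tn]. Qed.

Lemma xt_fac t i : 1 - xt t * (q ^+ 2) ^+ i = 1 - iK t * q ^ (-1 + 2 * (i : nat)%:Z).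
Proof.
rewrite /xt -mulrA -exprM (qn_int (2 * i)) (expfzDr _ _ q_neq0).
by rewrite -[(-1)%R]/(Negz 0).
Qed.

Lemma yt_fac t i : t != 0 -> 1 - (q / xt t) * (q ^+ 2) ^+ i = 1 - iK t^-1 * q ^ (2 + 2 * (i : nat)%:Z).
Proof.
move=> t0; rewrite /xt gY -(iKV t0) -mulrA -exprM -exprD (qn_int (2 + 2 * i)).
by rewrite PoszD PoszM.
Qed.

Lemma Un_x t i : good t -> Un (1 - xt t * (q ^+ 2) ^+ i).
Proof. by case=> t0 tn; rewrite (xt_fac t i); exact: (Un_faz _ t0 tn). Qed.

Lemma Un_y t i : good t -> Un (1 - (q / xt t) * (q ^+ 2) ^+ i).
Proof. by move=> g; case: (g) => t0 _; case: (goodV g) => t1 tn; rewrite (yt_fac i t0); exact: (Un_faz _ t1 tn). Qed.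

Lemma Un_x1 i : (i < m)%N -> Un (1 - xt 1 * (q ^+ 2) ^+ i).
Proof.
move=> hi; rewrite xt_fac iK1 mul1r; apply: Un_fpz.
case: i hi => [|i] hi; first by rewrite dvdn1; lia.
have -> : (-1 + 2 * (i.+1 : nat)%:Z)%R = Posz (2 * i + 1) by lia.
rewrite absz_nat gtnNdvd //; lia.
Qed.

Lemma Un_y1 i : (i < n.-1)%N -> Un (1 - (q / xt 1) * (q ^+ 2) ^+ i).
Proof.
move=> hi; rewrite (yt_fac _ (oner_neq0 _)) invr1 iK1 mul1r; apply: Un_fpz.
have -> : (2 + 2 * (i : nat)%:Z)%R = Posz (2 * i + 2) by lia.
rewrite absz_nat; apply/negP => /dvdnP [c hc].
have : (c < 2)%N by nia.
case: c hc => [|[|c]] hc _; nia.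
Qed.

Lemma Un_xt t : t != 0 -> Un (xt t).
Proof. by move=> t0; apply: Un_mul; [exact: Un_iK | apply: Un_inv; exact: Un_q]. Qed.

Lemma good_tX i : good (tX i). Proof. by split; [exact: tX_neq0 | exact: tX_pow]. Qed.

Lemma ts_good t : t \in ts -> (good t \/ t = 1).
Proof.
rewrite /ts !inE => /orP [/eqP -> | /orP [/eqP -> | /orP [/eqP -> | /orP [/eqP -> | /orP [/eqP -> | /eqP ->]]]]].
- by left; apply: good_tX.
- by left; apply: goodV; apply: good_tX.
- by left; apply: goodV; apply: good_tX.
- by left; apply: good_tX.
- by left; apply: good_tX.
- by right.
Qed.

Lemma xtE : [/\ xt tA = av / q, xt tA^-1 = av^-1 / q, xt tB^-1 = bv^-1 / q &
   [/\ xt tC = cv / q, xt tD = dv / q & xt 1 = 1 / q]].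
Proof.
rewrite /xt (iKV (tX_neq0 0)) (iKV (tX_neq0 1)) iK1; split; try split; exact: erefl.
Qed.

Lemma nz_abcd : [/\ av != 0, bv != 0, cv != 0 & dv != 0].
Proof. by split; rewrite iK_eq0; exact: tX_neq0. Qed.

Lemma prod_W : \prod_(t <- ts) W (xt t) m = (zz^-1) ^+ m * \prod_(j < m) (q * (q ^ (-1 - 2 * (j : nat)%:Z)) ^+ 6).
Proof.
rewrite /W exchange_big /=.
rewrite (_ : (zz^-1) ^+ m = \prod_(j < m) zz^-1); last by rewrite prodr_const card_ord.
rewrite -big_split /=; apply: eq_bigr => j _.
case: xtE => e1 e2 e3 [e4 e5 e6]; case: nz_abcd => a0 b0 c0 d0.
rewrite /ts !big_cons big_nil e1 e2 e3 e4 e5 e6 (g_pW _ q_neq0 a0 b0 c0 d0).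
by rewrite /zz [RHS]mulrA.
Qed.

Lemma prod_c : \prod_(t <- ts) (q / xt t ^+ 2) = q ^+ 4 * zz ^+ 2.
Proof.
case: xtE => e1 e2 e3 [e4 e5 e6]; case: nz_abcd => a0 b0 c0 d0.
by rewrite /ts !big_cons big_nil e1 e2 e3 e4 e5 e6 (g_pc q_neq0 a0 b0 c0 d0).
Qed.

Lemma q_fac (j : nat) : q * (q ^ (-1 - 2 * j%:Z)) ^+ 6 = q ^ (-5 - 12 * j%:Z).
Proof.
rewrite -[(q ^ _) ^+ 6]/((q ^ _) ^ 6%:Z) exprz_exp -{1}(expr1z q) -(expfzDr _ _ q_neq0).
congr (q ^ _); lia.
Qed.

Lemma prodq (M : nat) : \prod_(j < M) (q * (q ^ (-1 - 2 * (j : nat)%:Z)) ^+ 6) =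
   q ^ (- 5 * M%:Z - 6 * M%:Z * (M%:Z - 1)).
Proof.
elim: M => [|M IH]; first by rewrite big_ord0 expr0z.
rewrite big_ord_recr /= IH q_fac -(expfzDr _ _ q_neq0).
congr (q ^ _); lia.
Qed.

Lemma Un_1q : Un (1 - q).
Proof. rewrite -[q in 1 - q]expr1; apply: Un_fp; rewrite dvdn1; lia. Qed.

Lemma QE k (E : int) : (k <= m)%N -> E = - 5 * m%:Z - 6 * m%:Z * (m%:Z - 1) + 4 * k%:Z ->
  eqv (qint q (4 * (m - k)%:Z - 1) * q ^ E)
      (- qint q (4 * k%:Z - 1)).
Proof.
move=> hk hE; rewrite /qint g_qint g_qint2.
apply: eqv_mull; first by case: Un_1q.
rewrite -(expfzDr _ _ q_neq0).
apply: eqv_add.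
  apply: (eqv_qpow (t := - (3 * m%:Z + 1))); lia.
apply: eqv_opp; rewrite -(expr0z q).
apply: (eqv_qpow (t := - (3 * m%:Z - 1))); lia.
Qed.

Lemma t_ne0 t : t \in ts -> t != 0.
Proof. by move=> /ts_good [[t0 _] | ->]; [exact: t0 | exact: oner_neq0]. Qed.

Lemma hmn : (m <= n.-1)%N. Proof. lia. Qed.

Lemma Un_qpx t j : t \in ts -> (j <= m)%N -> Un (qp (xt t) j).
Proof.
move=> ht hj; apply: Un_qp => i hi.
case: (ts_good ht) => [g | ->]; first exact: Un_x.
by apply: Un_x1; apply: leq_trans hi hj.
Qed.

Lemma Un_qpy t j : t \in ts -> (j <= n.-1)%N -> Un (qp (q / xt t) j).
Proof.
move=> ht hj; apply: Un_qp => i hi.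
case: (ts_good ht) => [g | ->]; first exact: Un_y.
by apply: Un_y1; apply: leq_trans hi hj.
Qed.

Lemma Int_rho t j : t \in ts -> (j <= m)%N -> Int (rho (xt t) j).
Proof.
move=> ht hj; apply: Int_mul; first by case: (Un_qpx ht hj).
apply: Un_inv_Int; apply: Un_qpy ht _; exact: leq_trans hj hmn.
Qed.

Lemma Int_Pk k : (k <= m)%N -> Int (\prod_(t <- ts) rho (xt t) k).
Proof.
move=> hk; rewrite big_seq; apply: (big_ind Int Int1 Int_mul) => t ht.
exact: Int_rho.
Qed.

Lemma Un_zz : Un zz.
Proof.
case: nz_abcd => a0 b0 c0 d0.
rewrite /zz; apply: Un_mul; first by apply: Un_mul; [exact: Un_iK (tX_neq0 1) | exact: Un_qn].
by apply: Un_inv; apply: Un_mul; [exact: Un_iK (tX_neq0 2) | exact: Un_iK (tX_neq0 3)].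
Qed.

Lemma Int_qint z : Int (qint q z).
Proof.
rewrite /qint; apply: Int_mul; first by apply: Int_sub; [exact: Int1 | exact: Int_qz].
by case: Un_1q.
Qed.

Lemma pair k : (k <= m)%N -> eqv (term (m - k)) (- term k).
Proof.
move=> hk; rewrite !term_rho.
have e1 : eqv (\prod_(t <- ts) rho (xt t) (m - k))
    (\prod_(t <- ts) (W (xt t) m * rho (xt t) k * (q / xt t ^+ 2) ^+ k)).
  rewrite big_seq [X in eqv _ X]big_seq; apply: eqv_big => t ht; split.
  - apply: Int_rho ht _; exact: leq_subr.
  - apply: Int_mul; first by apply: Int_mul; [apply: Int_W; case: (Un_xt (t_ne0 ht)) | exact: Int_rho].
    apply: Int_exp; apply: Int_mul; first exact: Int_poly.
    by rewrite expr2 invfM; apply: Int_mul; case: (Un_xt (t_ne0 ht)).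
  - apply: RX => //; first exact: Un_xt (t_ne0 ht).
    + move=> i hi; case: (ts_good ht) => [g | ->]; [exact: Un_x | exact: Un_x1].
    + move=> i hi; case: (ts_good ht) => [g | ->]; first exact: Un_y.
      by apply: Un_y1; apply: leq_trans hi hmn.
apply: eqv_trans (eqv_mull _ e1) _.
  by apply: Int_mul; [exact: Int_qint | apply: Int_exp; by case: Un_zz].
rewrite big_split big_split /= prodrXl prod_W prod_c prodq.
rewrite (g_fin _ _ _ _ (Un_neq0 Un_zz) hk).
rewrite -exprM (qn_int (4 * k)) -(expfzDr _ _ q_neq0) PoszM.
rewrite -[X in eqv _ (- X)]mulrA -[X in eqv _ X]mulNr; apply: eqv_mul.
- apply: Int_opp; exact: Int_qint.
- apply: Int_mul; [apply: Int_exp; by case: Un_zz | exact: Int_Pk].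
- apply: QE => //; lia.
- exact: eqv_refl.
Qed.

Lemma Zr_mulr x y : Zr x -> Int y -> Zr (x * y).
Proof. by move=> hx hy; rewrite mulrC; apply: Zr_mul. Qed.

Lemma Zr_sum_half : Zr (\sum_(0 <= k < m.+1) term k).
Proof.
set S := \sum_(0 <= k < m.+1) term k.
have two0 : (1 + 1 : Kc) != 0.
  have -> : (1 + 1 : Kc) = fQK (1 + 1) by rewrite rmorphD rmorph1.
  by rewrite fmorph_eq0.
have h2 : iK (1 + 1)^-1 * (1 + 1) = 1.
  have -> : (1 + 1 : Fq) = iK (1 + 1) by rewrite /iK polyCD polyC1 tofracD tofrac1.
  by rewrite -iKM mulVf // iK1.
rewrite (g_half S h2) /S; apply: Zr_mulr; last exact: Int_iK.
rewrite {2}big_nat_rev /= -big_split /= big_nat_cond.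
apply: (big_ind Zr Zr0 Zr_add) => k /andP [/andP [_ hk] _].
rewrite add0n subSS.
have hk' : (k <= m)%N by rewrite -ltnS.
have := pair hk'; rewrite /eqv opprK addrC; exact.
Qed.

Lemma Zr_qp1 k : (m < k)%N -> Zr (qp (xt 1) k).
Proof.
move=> hk; rewrite /qp /qpoch (bigD1 (Ordinal hk)) //=.
apply: Zr_mulr.
  rewrite -/(qv) (xt_fac 1 m) iK1 mul1r.
  have -> : (-1 + 2 * (m : nat)%:Z) = Posz (n * 1) by lia.
  rewrite -qn_int -opprB; apply: Zr_opp; exact: Zr_qnt.
apply: (big_ind Int Int1 Int_mul) => i _.
apply: Int_sub; first exact: Int1.
apply: Int_mul; last exact: Int_q2.
by case: (Un_xt (oner_neq0 Kc)).
Qed.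

Lemma Zr_far k : (m < k)%N -> (k <= n.-1)%N -> Zr (term k).
Proof.
move=> hk1 hk2; rewrite term_rho.
apply: Zr_mul; first by apply: Int_mul; [exact: Int_qint | apply: Int_exp; by case: Un_zz].
have iR t : t \in ts -> Int (rho (xt t) k).
  move=> ht; apply: Int_mul; first by apply: Int_qp; case: (Un_xt (t_ne0 ht)).
  by apply: Un_inv_Int; apply: Un_qpy.
have m1 : tA \in ts := mem_head _ _.
have m2 : tA^-1 \in ts by apply: (@mem_behead _ ts); exact: mem_head.
have m3 : tB^-1 \in ts by do 2 apply: mem_behead; exact: mem_head.
have m4 : tC \in ts by do 3 apply: mem_behead; exact: mem_head.
have m5 : tD \in ts by do 4 apply: mem_behead; exact: mem_head.
have m6 : 1 \in ts by do 5 apply: mem_behead; exact: mem_head.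
rewrite /ts !big_cons big_nil.
apply: Zr_mul; first exact: iR m1.
apply: Zr_mul; first exact: iR m2.
apply: Zr_mul; first exact: iR m3.
apply: Zr_mul; first exact: iR m4.
apply: Zr_mul; first exact: iR m5.
apply: Zr_mulr; last exact: Int1.
apply: Zr_mulr; first exact: Zr_qp1.
by apply: Un_inv_Int; apply: Un_qpy m6 hk2.
Qed.
End S.

Theorem lemma2p1 (n M : nat) :
  odd n -> (1 < n)%N -> (M = (n.+1 %/ 2)%N \/ M = n.-1) ->
  congr_mod (\sum_(0 <= k < M.+1) term k) 0 (PhiK n).
Proof.
move=> on n1 hM.
have hm : n.+1 = (2 * (n.+1 %/ 2))%N by rewrite mulnC divnK // dvdn2 /= negbK on.
move: (n.+1 %/ 2)%N hm hM => m hm hM.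
apply: (Zr_congr n1).
case: hM => ->.
  exact (Zr_sum_half n1 hm).
have hmn : (m.+1 <= n)%N by lia.
rewrite prednK; last by lia.
rewrite (big_cat_nat _ (n := m.+1)) //=.
apply: (Zr_add n1); first exact (Zr_sum_half n1 hm).
rewrite big_nat_cond; apply: (big_ind (Zr n) (Zr0 n) (Zr_add n1)) => k /andP [/andP [h1 h2] _].
apply: (Zr_far n1 hm h1); lia.
Qed.
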